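(* Let $\mu_1,\mu_2,\mu$ be probability measures on a measurable space $(E,\mathscr B)$. Then for every $p>1$, $$\mathrm{Ent}(\mu_1|\mu_2)\le p\,\mathrm{Ent}(\mu_1|\mu)+(p-1)\log\int_E\Big(\frac{\mathrm d\mu}{\mathrm d\mu_2}\Big)^{\frac p{p-1}}\mathrm d\mu_2,$$ where the right-hand side is set to be $+\infty$ if $\frac{\mathrm d\mu_1}{\mathrm d\mu}$ or $\frac{\mathrm d\mu}{\mathrm d\mu_2}$ does not exist.
   Context: $\mathrm{Ent}(\nu|\lambda)=\int\log\frac{\mathrm d\nu}{\mathrm d\lambda}\,\mathrm d\nu$ if $\nu\ll\lambda$, and $+\infty$ otherwise. *)

(* Defs.v *)
From HB Require Import structures.
From mathcomp Require Import all_boot all_order all_algebra.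
From mathcomp Require Import all_classical all_reals all_analysis.
Set Implicit Arguments. Unset Strict Implicit. Unset Printing Implicit Defensive.
Import Order.TTheory GRing.Theory Num.Theory.
Local Open Scope classical_set_scope.
Local Open Scope ring_scope.
Local Open Scope ereal_scope.

(* Radon-Nikodym derivative d nu / d lam of probability measures
   (library version 'd _ '/d _ from charge.v; it is a genuine density
   whenever nu `<< lam). *)
Definition RN d (T : measurableType d) (R : realType)
  (nu lam : probability T R) : T -> \bar R :=
  Radon_Nikodym (charge_of_finite_measure nu) lam.

Definition Ent d (T : measurableType d) (R : realType)
  (nu lam : probability T R) : \bar R :=
  if pselect (nu `<< lam) then \int[nu]_x lne (RN nu lam x) else +oo.

(* Main.v *)
Set Warnings "-notation-overridden,-ambiguous-paths,-notation-incompatible-prefix".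
Require Import Defs.
From HB Require Import structures.
From mathcomp Require Import all_boot all_order all_algebra.
From mathcomp Require Import all_classical all_reals all_analysis.
From mathcomp Require Import measurable_realfun lebesgue_integral_theory.measurable_fun_approximation.
From mathcomp Require Import ring lra.
Import Order.TTheory GRing.Theory Num.Theory.
Local Open Scope classical_set_scope.
Local Open Scope ring_scope.
Local Open Scope ereal_scope.
Set Implicit Arguments. Unset Strict Implicit.

Lemma measurable_lneC d (T : measurableType d) (R : realType) (f : T -> \bar R) : measurable_fun setT f -> measurable_fun setT (fun x => lne (f x)).
Proof.
move=> mf.
have -> : (fun x => lne (f x)) = fun x => if f x <= 0 then -oo else if f x == +oo then +oo else (ln (fine (f x)))%:E.
  apply/funext => x; by case: (f x) => [r| |] //=; rewrite leNye.
apply: measurable_fun_ifT => //=; first exact: measurable_fun_lee.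
apply: measurable_fun_ifT => //=; first exact: measurable_fun_eqe.
apply/measurable_EFinP => //=.
apply: (measurableT_comp (@measurable_ln R)).
exact: measurableT_comp.
Qed.

Section helpers.
Context d (T : measurableType d) (R : realType).
Notation SF := Radon_Nikodym_SigmaFinite.f.

Lemma ae_dom (nu lam : {measure set T -> \bar R}) (Q : T -> Prop) :
  nu `<< lam -> {ae lam, forall x, Q x} -> {ae nu, forall x, Q x}.
Proof.
move=> /null_content_dominatesP m21 [A [mA A0 sA]]; exists A; split => //.
exact: m21.
Qed.

Lemma SF_measurable (nu : {finite_measure set T -> \bar R})
  (lam : {sigma_finite_measure set T -> \bar R}) : nu `<< lam ->
  measurable_fun setT (SF nu lam).
Proof.
move=> nl; exact: measurable_int (Radon_Nikodym_SigmaFinite.f_integrable nl).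
Qed.

Lemma RN_SF (nu lam : probability T R) : nu `<< lam ->
  ae_eq lam setT (RN nu lam) (SF nu lam).
Proof.
move=> nl; apply: ae_eq_sym; exact: ae_eq_Radon_Nikodym_SigmaFinite.
Qed.

Lemma SF_pos (nu : {finite_measure set T -> \bar R})
  (lam : {sigma_finite_measure set T -> \bar R}) : nu `<< lam ->
  {ae nu, forall x, 0 < SF nu lam x}.
Proof.
move=> nl.
have mf := SF_measurable nl.
have mN : measurable (SF nu lam @^-1` [set 0]).
  by rewrite -[X in measurable X]setTI; apply: mf.
exists (SF nu lam @^-1` [set 0]); split => //.
  rewrite (@Radon_Nikodym_SigmaFinite.f_integral _ _ _ nu lam nl) //.
  rewrite (eq_integral (fun _ => 0)) ?integral0 // => x.
  by rewrite inE /=.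
move=> x /= /negP; rewrite lt_neqAle Radon_Nikodym_SigmaFinite.f_ge0 // andbT.
by rewrite negbK eq_sym => /eqP.
Qed.

End helpers.

Section helpers2.
Context d (T : measurableType d) (R : realType).
Notation SF := Radon_Nikodym_SigmaFinite.f.

Lemma ae_le_integral (nu : {measure set T -> \bar R}) (f g : T -> \bar R) :
  measurable_fun setT f -> measurable_fun setT g ->
  {ae nu, forall x, f x <= g x} -> \int[nu]_x f x <= \int[nu]_x g x.
Proof.
move=> mf mg fg; have -> := integralE nu setT f; have -> := integralE nu setT g; apply: leeB.
- apply: ae_ge0_le_integral => //.
  all: try exact: measurable_funepos.
  all: try (by move=> x _; exact: funepos_ge0).
  apply: filterS fg => x fgx _.
  by apply: (@funepos_le _ _ [set y | f y <= g y] f g); [move=> y; rewrite inE|rewrite inE].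
- apply: ae_ge0_le_integral => //.
  all: try exact: measurable_funeneg.
  all: try (by move=> x _; exact: funeneg_ge0).
  apply: filterS fg => x fgx _.
  by apply: (@funeneg_le _ _ [set y | f y <= g y] f g); [move=> y; rewrite inE|rewrite inE].
Qed.

Lemma fin_integrable (nu : {measure set T -> \bar R}) (f : T -> \bar R) :
  measurable_fun setT f -> \int[nu]_x f x \is a fin_num -> nu.-integrable setT f.
Proof.
move=> mf; rewrite integralE fin_numB => /andP[fp fn].
apply/integrableP; split => //.
rewrite (_ : (fun x => `|f x|) = f^\+ \+ f^\-); last by rewrite -fune_abse.
rewrite ge0_integralD //; last first.
all: try exact: measurable_funeneg.
all: try exact: measurable_funepos.
all: try (by move=> x _; exact: funeneg_ge0).
all: try (by move=> x _; exact: funepos_ge0).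
by rewrite -(fineK fp) -(fineK fn) -EFinD ltry.
Qed.

Lemma cov (nu lam : probability T R) (k : T -> \bar R) : nu `<< lam ->
  (forall x, 0 <= k x) -> measurable_fun setT k ->
  \int[nu]_x k x = \int[lam]_x (k x * SF nu lam x).
Proof.
move=> nl k0 mk.
by rewrite (@Radon_Nikodym_SigmaFinite.change_of_variables _ _ _ nu lam nl k setT k0 measurableT mk).
Qed.

Lemma Ent_SF (nu lam : probability T R) : nu `<< lam ->
  Ent nu lam = \int[nu]_x lne (SF nu lam x).
Proof.
move=> nl; rewrite /Ent; case: pselect => [h|/(_ nl)//].
apply: ae_eq_integral => //.
- apply: measurable_lneC.
  rewrite /RN; apply: (measurable_int lam); apply: Radon_Nikodym_integrable; exact: nl.
- apply: measurable_lneC; exact: (SF_measurable nl).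
- rewrite /ae_eq; apply: filterS (@ae_dom _ _ _ nu lam (fun x => setT x -> RN nu lam x = SF nu lam x) nl (RN_SF nl)).
  by move=> x /(_ I) -> _.
Qed.

Lemma ln_le_sub1 (x : R) : (0 < x)%R -> (ln x <= x - 1)%R.
Proof.
move=> x0; have := @le_ln1Dx R (x - 1).
rewrite addrCA subrr addr0; apply; lra.
Qed.

Lemma negpart_bound (r : R) : (0 <= r)%R ->
  maxe (- lne r%:E) 0 * r%:E <= 1.
Proof.
move=> r0; have [->|rn0] := eqVneq r 0%R; first by rewrite mule0.
have rp : (0 < r)%R by rewrite lt_neqAle eq_sym rn0.
have -> : lne r%:E = (ln r)%:E by rewrite /lne leNgt rp.
rewrite -EFinN -EFin_max -EFinM lee_fin.
have h1 : (- ln r * r <= 1)%R.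
  have := @ln_le_sub1 r^-1; rewrite invr_gt0 rp => /(_ isT); rewrite lnV ?posrE //.
  move=> h; have := ler_wpM2r (ltW rp) h.
  rewrite mulrBl mulVf ?gt_eqF // mul1r; lra.
by case: (lerP (- ln r)%R 0%R) => _; rewrite ?mul0r.
Qed.

Lemma Ent_gtNy (nu lam : probability T R) : nu `<< lam ->
  -oo < \int[nu]_x lne (SF nu lam x).
Proof.
move=> nl; set f := SF nu lam.
have mf := SF_measurable nl.
have mlf : measurable_fun setT (fun x => lne (f x)) := measurable_lneC mf.
have f0 x : 0 <= f x := Radon_Nikodym_SigmaFinite.f_ge0 nl x.
have ffin x : f x \is a fin_num := Radon_Nikodym_SigmaFinite.f_fin_num nl x.
have hn : \int[nu]_x (fun x => lne (f x))^\- x <= 1.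
  rewrite (cov nl); [|by move=> x; exact: funeneg_ge0|exact: measurable_funeneg].
  apply: (@le_trans _ _ (\int[lam]_x (cst 1 x))).
    apply: ge0_le_integral => //.
    - by move=> x _; rewrite mule_ge0 // funeneg_ge0.
    - apply: emeasurable_funM => //; exact: measurable_funeneg.
    - move=> x _; rewrite funenegE /=; change (SF nu lam x) with (f x).
      move: (ffin x) (f0 x); case: (f x) => // r _; rewrite lee_fin => r0.
      exact: negpart_bound.
  rewrite integral_cst // mul1e; exact: probability_le1.
have nfin : \int[nu]_x (fun x => lne (f x))^\- x \is a fin_num.
  rewrite ge0_fin_numE; last by apply: integral_ge0 => x _; exact: funeneg_ge0.
  by apply: (le_lt_trans hn); rewrite ltry.
rewrite integralE.
have pos0 : 0 <= \int[nu]_x (fun x => lne (f x))^\+ x.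
  by apply: integral_ge0 => x _; exact: funepos_ge0.
apply: (lt_le_trans _ (leeB pos0 (lexx _))).
by rewrite -(fineK nfin) add0e -EFinN ltNyr.
Qed.

Lemma int_pow_gt0 (nu lam : probability T R) (q : R) : nu `<< lam ->
  0 < \int[lam]_x poweR (SF nu lam x) q.
Proof.
move=> nl; set h := SF nu lam.
have mh := SF_measurable nl.
have h0 x : 0 <= h x := Radon_Nikodym_SigmaFinite.f_ge0 nl x.
have mp : measurable_fun setT (fun x => poweR (h x) q).
  exact: measurableT_comp (measurable_poweR q) mh.
rewrite lt_neqAle integral_ge0 ?andbT; last by move=> x _; exact: poweR_ge0.
apply/negP => /eqP H0.
have ae0 : ae_eq lam setT (fun x => poweR (h x) q) (cst 0).
  apply/(ae_eq_integral_abs _ measurableT mp).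
  under eq_integral do rewrite gee0_abs ?poweR_ge0 //.
  by rewrite -H0.
have H1 := @Radon_Nikodym_SigmaFinite.f_integral _ _ _ nu lam nl setT measurableT.
have e1 : \int[lam]_x h x = 1 by rewrite -H1; exact: probability_setT.
move: e1; rewrite (@ae_eq_integral _ _ _ lam setT (cst 0) h measurableT mh) ?integral0 //.
  by move=> /eqP; rewrite eq_sym eqe oner_eq0.
rewrite /ae_eq; apply: filterS ae0 => x /(_ I) hx _.
by rewrite (poweR_eq0_eq0 (h0 x) hx).
Qed.

Lemma lnM' (a b : R) : (0 < a)%R -> (0 < b)%R -> ln (a * b)%R = (ln a + ln b)%R.
Proof. by move=> a0 b0; apply: lnM; rewrite posrE. Qed.

Lemma key_ineq (p c F H : R) : (1 < p)%R -> (0 < c)%R -> (0 < F)%R -> (0 < H)%R ->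
  (ln F + ln H <= p * ln F + ((p - 1) / c * (powR H (p - 1)^-1 / F)
     + (p - 1) * (ln c - 1)))%R.
Proof.
move=> p1 c0 F0 H0.
set r := (p - 1)^-1%R.
set P := powR H r.
have P0 : (0 < P)%R by apply: powR_gt0.
set y := (P / (F * c))%R.
have y0 : (0 < y)%R by rewrite divr_gt0 // mulr_gt0.
have hy := ln_le_sub1 y0.
have e1 : ln P = (r * ln H)%R by rewrite ln_powR.
have e2 : ln P = (ln y + ln F + ln c)%R.
  have -> : P = (y * (F * c))%R by rewrite /y divfK // mulf_neq0 // gt_eqF.
  have := lnM' y0 (mulr_gt0 F0 c0); move=> ->.
  have := lnM' F0 c0; move=> ->; lra.
have e3 : ((p - 1) * r = 1)%R by rewrite /r divff // gt_eqF // subr_gt0.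
have e4 : ((p - 1) / c * (P / F) = (p - 1) * y)%R.
  by rewrite /y invfM; field; rewrite ?gt_eqF.
have e5 : ln H = ((p - 1) * (ln y + ln F + ln c))%R.
  by rewrite -e2 e1 mulrA e3 mul1r.
rewrite e4 e5.
have h : (0 <= (p - 1) * (y - 1 - ln y))%R.
  by apply: mulr_ge0; rewrite subr_ge0; [exact: ltW|exact: hy].
lra.
Qed.

End helpers2.

Unset Implicit Arguments.

Lemma lne_gtNy (R : realType) (x : \bar R) : 0 < x -> -oo < lne x.
Proof. by case: x => [r| |] //; rewrite lte_fin => r0 /=; rewrite leNgt r0 ltNyr. Qed.

Theorem lemma2p1 (d : measure_display) (E : measurableType d) (R : realType)
    (mu1 mu2 mu : probability E R) (p : R) :
  (1 < p)%R ->
  Ent mu1 mu2 <=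
    (if pselect (mu1 `<< mu /\ mu `<< mu2) then
       p%:E * Ent mu1 mu
       + (p - 1)%:E * lne (\int[mu2]_x poweR (RN mu mu2 x) (p / (p - 1)))
     else +oo).
Proof.
move=> p1.
case: pselect => [[m1 m2]|nm]; last exact: leey.
have m12 := null_dominates_trans m1 m2.
rewrite (Ent_SF m12) (Ent_SF m1).
have p10 : (0 < p - 1)%R by rewrite subr_gt0.
have p0 : (0 < p)%R by apply: lt_trans p1.
set q := (p / (p - 1))%R.
have mf1 := SF_measurable m1.
have mh := SF_measurable m2.
have mg := SF_measurable m12.
set f1 := Radon_Nikodym_SigmaFinite.f mu1 mu.
set h := Radon_Nikodym_SigmaFinite.f mu mu2.
set g := Radon_Nikodym_SigmaFinite.f mu1 mu2.
have -> : \int[mu2]_x poweR (RN mu mu2 x) q = \int[mu2]_x poweR (h x) q.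
  apply: ae_eq_integral => //.
  - apply: measurableT_comp (measurable_poweR q) _.
    rewrite /RN; apply: (measurable_int mu2); apply: Radon_Nikodym_integrable; exact: m2.
  - exact: measurableT_comp (measurable_poweR q) mh.
  - move: (RN_SF m2); rewrite /ae_eq; apply: filterS => x /(_ I) -> _ //.
set A := \int[mu1]_x lne (f1 x).
set I := \int[mu2]_x poweR (h x) q.
have AgtNy : -oo < A := Ent_gtNy m1.
have I0 : 0 < I := int_pow_gt0 q m2.
have lneIgt : -oo < lne I by apply: lne_gtNy.
have [Ay|Afin] : (A = +oo) \/ A \is a fin_num.
  by move: AgtNy; case: (A) => //; [right|left].
  rewrite Ay gt0_muley ?lte_fin // addye ?leey //.
  move: lneIgt; case: (lne I) => [r _| _ |//].
    by rewrite -EFinM.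
  by rewrite gt0_muley ?lte_fin.
have [Iy|Ifin] : (I = +oo) \/ I \is a fin_num.
  by move: I0; case: (I) => //; [right|left].
  rewrite Iy /= gt0_muley ?lte_fin // addey ?leey //.
  by rewrite -(fineK Afin) -EFinM.
set a := fine A.
set c := fine I.
have c0 : (0 < c)%R by rewrite -lte_fin /c fineK.
have lneIE : lne I = (ln c)%:E by rewrite -(fineK Ifin) /= leNgt c0.
rewrite lneIE.
set F := fun x => fine (f1 x).
set Hh := fun x => fine (h x).
have f1E x : f1 x = (F x)%:E.
  by rewrite /F fineK // Radon_Nikodym_SigmaFinite.f_fin_num.
have hE x : h x = (Hh x)%:E.
  by rewrite /Hh fineK // Radon_Nikodym_SigmaFinite.f_fin_num.
have F0 x : (0 <= F x)%R.
  by rewrite -lee_fin -f1E Radon_Nikodym_SigmaFinite.f_ge0.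
have Hh0 x : (0 <= Hh x)%R.
  by rewrite -lee_fin -hE Radon_Nikodym_SigmaFinite.f_ge0.
have mF : measurable_fun setT F by exact: measurableT_comp.
have mHh : measurable_fun setT Hh by exact: measurableT_comp.
set r := ((p - 1)^-1)%R.
set k := fun x => (powR (Hh x) r * powR (F x) (-1))%R.
have kE x : k x = (powR (Hh x) r / F x)%R by rewrite /k powR_inv1.
have k0 x : (0 <= k x)%R by rewrite kE divr_ge0 // powR_ge0.
have mk : measurable_fun setT k.
  apply: measurable_funM.
  - exact: measurableT_comp (measurable_powR r) mHh.
  - exact: measurableT_comp (measurable_powR (-1)%R) mF.
have mkE : measurable_fun setT (fun x => (k x)%:E) by apply/measurable_EFinP.
have mPE : measurable_fun setT (fun x => (powR (Hh x) r)%:E).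
  apply/measurable_EFinP; exact: measurableT_comp (measurable_powR r) mHh.
set J := \int[mu1]_x (k x)%:E.
have J0 : 0 <= J by apply: integral_ge0 => x _; rewrite lee_fin.
have JI : J <= I.
  rewrite /J (cov m1) -/f1 //; try (by move=> x; rewrite lee_fin).
  apply: (@le_trans _ _ (\int[mu]_x (powR (Hh x) r)%:E)).
    apply: ge0_le_integral => //.
    - by move=> x _; rewrite f1E -EFinM lee_fin mulr_ge0.
    - by apply: emeasurable_funM.
    - move=> x _; rewrite f1E -EFinM lee_fin kE.
      have [->|Fn0] := eqVneq (F x) 0%R; first by rewrite mulr0 powR_ge0.
      by rewrite divfK.
  rewrite (cov m2) -/h //; try (by move=> x; rewrite lee_fin powR_ge0).
  rewrite le_eqVlt; apply/orP; left; apply/eqP; apply: eq_integral => x _.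
  rewrite hE -EFinM /=.
  congr EFin.
  rewrite -{2}(powRr1 (Hh0 x)) -powRD; last by rewrite gt_eqF // addr_gt0 // invr_gt0.
  congr powR; rewrite /q /r; field.
  by rewrite gt_eqF.
have Jfin : J \is a fin_num.
  by rewrite ge0_fin_numE // (le_lt_trans JI) // -(fineK Ifin) ltry.
set j := fine J.
have jc : (j <= c)%R by rewrite -lee_fin /j /c !fineK.
have intA : mu1.-integrable setT (fun x => lne (f1 x)).
  exact: fin_integrable (measurable_lneC mf1) Afin.
have intk : mu1.-integrable setT (fun x => (k x)%:E).
  apply/integrableP; split => //.
  under eq_integral do rewrite gee0_abs ?lee_fin //.
  by rewrite -/J -(fineK Jfin) ltry.
set K := ((p - 1) / c)%R.
set C := ((p - 1) * (ln c - 1))%R.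
have M1 : \int[mu1]_x lne (g x) <=
    \int[mu1]_x (p%:E * lne (f1 x) + (K%:E * (k x)%:E + C%:E)).
  apply: ae_le_integral.
  - exact: measurable_lneC.
  - apply: emeasurable_funD.
    + apply: emeasurable_funM => //; exact: measurable_lneC.
    + apply: emeasurable_funD => //; exact: emeasurable_funM.
  - have ae1 := SF_pos m1.
    have ae2 := ae_dom m1 (SF_pos m2).
    have ae3 := @ae_dom _ _ _ mu1 mu2 (fun x => setT x -> g x = (f1 \* h) x) m12
      (@Radon_Nikodym_SigmaFinite.chain_rule _ _ _ mu1 mu2 mu setT m1 m2 measurableT).
    apply: filterS3 ae1 ae2 ae3 => x f1p hp /(_ Logic.I) gE.
    rewrite gE /= f1E hE -EFinM.
    move: f1p hp; rewrite -/f1 -/h f1E hE !lte_fin => Fp Hp.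
    have -> : lne ((F x * Hh x)%:E) = (ln (F x) + ln (Hh x))%:E.
      by rewrite /= leNgt mulr_gt0 // lnM'.
    have -> : lne ((F x)%:E) = (ln (F x))%:E by rewrite /= leNgt Fp.
    rewrite -!EFinM -!EFinD lee_fin kE.
    exact: key_ineq.
have iC : \int[mu1]_x C%:E = C%:E.
  have := integral_cst mu1 measurableT C%:E; rewrite /cst => ->.
  rewrite -[RHS]mule1; congr (_ * _); exact: probability_setT.
have M2 : \int[mu1]_x (p%:E * lne (f1 x) + (K%:E * (k x)%:E + C%:E)) =
    p%:E * A + (K%:E * J + C%:E).
  rewrite integralD //; last 2 first.
  - exact: integrableZl.
  - apply: integrableD => //; [exact: integrableZl|exact: finite_measure_integrable_cst].
  rewrite integralZl // integralD //; last 2 first.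
  - exact: integrableZl.
  - exact: finite_measure_integrable_cst.
  by rewrite integralZl // iC.
apply: (le_trans M1); rewrite M2.
rewrite -(fineK Afin) -(fineK Jfin) -/a -/j.
rewrite -!EFinM -!EFinD lee_fin.
have Kj : (K * j <= p - 1)%R.
  by rewrite /K mulrAC ler_pdivrMr // ler_pM2l.
rewrite /C; lra.
Qed.
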